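(* For $n\ge3$, the set $\mathcal G$ is a proper subset of $\mathcal S_1$, the class of $n\times n$ stochastic Sarymsakov matrices.
   Context: Let $\mathcal N=\{1,\ldots,n\}$. A matrix is stochastic if it is entrywise nonnegative with row sums $1$; it is SIA if $\lim_{m\to\infty}P^m=\mathbf 1c^T$ for some nonnegative $c$ with entries summing to $1$. For stochastic $P$ and $\mathcal A\subseteq\mathcal N$, $F_P(\mathcal A)=\{j:\ p_{ij}>0\text{ for some } i\in\mathcal A\}$. $\mathcal S_1$ is the set of stochastic $n\times n$ matrices $P$ (Sarymsakov matrices) such that for any disjoint nonempty $\mathcal A,\tilde{\mathcal A}\subseteq\mathcal N$, either $F_P(\mathcal A)\cap F_P(\tilde{\mathcal A})\neq\emptyset$, or $F_P(\mathcal A)\cap F_P(\tilde{\mathcal A})=\emptyset$ and $|F_P(\mathcal A)\cup F_P(\tilde{\mathcal A})|>|\mathcal A\cup\tilde{\mathcal A}|$. $\mathcal G$ is the set of $n\times n$ SIA matrices $P$ such that $QP$ is SIA for every $n\times n$ SIA matrix $Q$. *)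

(* Defs.v *)
(* An n x n matrix is represented as a function nat -> nat -> R, of which only
   the entries with indices < n are relevant (indices 0..n-1 stand for 1..n).
   Subsets of N = {0..n-1} are boolean predicates on nat, restricted to i < n. *)
From Stdlib Require Import Reals List Arith.
Open Scope R_scope.

Definition mat := nat -> nat -> R.

Fixpoint rsum (n : nat) (f : nat -> R) : R :=
  match n with O => 0 | S k => rsum k f + f k end.

Definition mmul (n : nat) (A B : mat) : mat :=
  fun i j => rsum n (fun k => A i k * B k j).

Definition mid : mat := fun i j => if Nat.eqb i j then 1 else 0.

Fixpoint mpow (n : nat) (A : mat) (m : nat) : mat :=
  match m with O => mid | S k => mmul n (mpow n A k) A end.

Definition stochastic (n : nat) (P : mat) : Prop :=
  (forall i j, (i < n)%nat -> (j < n)%nat -> 0 <= P i j) /\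
  (forall i, (i < n)%nat -> rsum n (P i) = 1).

Definition SIA (n : nat) (P : mat) : Prop :=
  stochastic n P /\
  exists c : nat -> R,
    (forall j, (j < n)%nat -> 0 <= c j) /\ rsum n c = 1 /\
    (forall i j, (i < n)%nat -> (j < n)%nat ->
       Un_cv (fun m => mpow n P m i j) (c j)).

Definition posb (x : R) : bool := if Rlt_dec 0 x then true else false.

Definition F (n : nat) (P : mat) (A : nat -> bool) : nat -> bool :=
  fun j => andb (Nat.ltb j n)
           (existsb (fun i => andb (A i) (posb (P i j))) (seq 0 n)).

Definition card (n : nat) (A : nat -> bool) : nat :=
  length (filter A (seq 0 n)).

Definition nonempty (n : nat) (A : nat -> bool) : Prop :=
  exists i, (i < n)%nat /\ A i = true.

Definition disjoint (n : nat) (A B : nat -> bool) : Prop :=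
  forall i, (i < n)%nat -> andb (A i) (B i) = false.

Definition union (A B : nat -> bool) : nat -> bool := fun i => orb (A i) (B i).
Definition inter (A B : nat -> bool) : nat -> bool := fun i => andb (A i) (B i).

Definition S1 (n : nat) (P : mat) : Prop :=
  stochastic n P /\
  forall A At : nat -> bool,
    nonempty n A -> nonempty n At -> disjoint n A At ->
    nonempty n (inter (F n P A) (F n P At)) \/
    (~ nonempty n (inter (F n P A) (F n P At)) /\
     (card n (union (F n P A) (F n P At)) > card n (union A At))%nat).

Definition G (n : nat) (P : mat) : Prop :=
  SIA n P /\ forall Q : mat, SIA n Q -> SIA n (mmul n Q P).

(* Main.v *)
Require Import Defs.
From Stdlib Require Import Reals List Arith Lia Lra Classical Bool.
Open Scope R_scope.

Lemma rsum_ext n f g : (forall k, (k < n)%nat -> f k = g k) -> rsum n f = rsum n g.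
Proof. induction n; simpl; intros H; auto. rewrite IHn by (intros; apply H; lia). rewrite H by lia. auto. Qed.

Lemma rsum_zero n f : (forall k, (k < n)%nat -> f k = 0) -> rsum n f = 0.
Proof. intros H. rewrite (rsum_ext n f (fun _ => 0)) by auto. induction n; simpl; auto.
  rewrite IHn by (intros; apply H; lia). lra. Qed.

Lemma rsum_plus n f g : rsum n (fun k => f k + g k) = rsum n f + rsum n g.
Proof. induction n; simpl; try rewrite IHn; lra. Qed.

Lemma rsum_const n c : rsum n (fun _ => c) = INR n * c.
Proof. induction n; simpl; try rewrite IHn; try (destruct n; simpl); lra. Qed.

Lemma rsum_ind n x h : (x < n)%nat ->
  rsum n (fun k => (if Nat.eqb x k then 1 else 0) * h k) = h x.
Proof. induction n; intros Hx; [lia|]. simpl. destruct (Nat.eqb_spec x n).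
  - subst. rewrite rsum_zero. lra. intros k Hk. destruct (Nat.eqb_spec n k); [lia|lra].
  - rewrite IHn by lia. lra. Qed.

Lemma rsum_ind1 n x : (x < n)%nat -> rsum n (fun k => if Nat.eqb x k then 1 else 0) = 1.
Proof. intros Hx. transitivity (rsum n (fun k => (if Nat.eqb x k then 1 else 0) * 1)). apply rsum_ext. intros; rewrite Rmult_1_r; reflexivity. apply (rsum_ind n x (fun _ => 1) Hx). Qed.

Lemma rsum_le0 n g : (forall k, (k < n)%nat -> g k <= 0) -> rsum n g <= 0.
Proof. induction n; simpl; intros H; try lra. assert (g n <= 0) by (apply H; lia).
  assert (rsum n g <= 0) by (apply IHn; intros; apply H; lia). lra. Qed.

Lemma rsum_pos_exists n g : rsum n g = 1 -> exists j, (j < n)%nat /\ 0 < g j.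
Proof. intros H. destruct (classic (exists j, (j < n)%nat /\ 0 < g j)) as [h|h]; auto.
  exfalso. assert (rsum n g <= 0); [|lra]. apply rsum_le0. intros k Hk.
  apply Rnot_lt_le. intros C. apply h. eauto. Qed.

Lemma mpow_zero_sets n M (Sq : nat -> nat -> bool) :
  (forall m k j, (k < n)%nat -> (j < n)%nat -> Sq m k = true -> Sq (S m) j = false -> M k j = 0) ->
  forall m i j, (i < n)%nat -> (j < n)%nat -> Sq 0%nat i = true -> Sq m j = false -> mpow n M m i j = 0.
Proof. intros HM m. induction m; intros i j Hi Hj H0 Hm; simpl.
  - unfold mid. destruct (Nat.eqb_spec i j); auto. subst. congruence.
  - unfold mmul. apply rsum_zero. intros k Hk. destruct (Sq m k) eqn:E.
    + rewrite (HM m k j) by auto. lra.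
    + rewrite IHm by auto. lra. Qed.

Lemma lim_zero_io u c : Un_cv u c -> (forall N, exists m, (m >= N)%nat /\ u m = 0) -> c = 0.
Proof. intros Hc Hio. destruct (Req_dec c 0) as [|Hne]; auto. exfalso.
  destruct (Hc (Rabs c)) as [N HN]. apply Rabs_pos_lt; auto.
  destruct (Hio N) as [m [Hm Hu]]. specialize (HN m Hm). rewrite Hu in HN.
  unfold R_dist in HN. rewrite Rminus_0_l, Rabs_Ropp in HN. lra. Qed.

Lemma not_SIA_io n M : (forall j, (j < n)%nat -> exists i, (i < n)%nat /\
   forall N, exists m, (m >= N)%nat /\ mpow n M m i j = 0) -> ~ SIA n M.
Proof. intros H [_ [c [_ [Hs Hl]]]]. rewrite rsum_zero in Hs. lra.
  intros j Hj. destruct (H j Hj) as [i [Hi Hio]]. eapply lim_zero_io. apply (Hl i j Hi Hj). auto. Qed.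

Lemma not_SIA_two n M (U V : nat -> bool) u v : (u < n)%nat -> U u = true -> (v < n)%nat -> V v = true ->
  (forall j, (j < n)%nat -> andb (U j) (V j) = false) ->
  (forall i j, (i < n)%nat -> (j < n)%nat -> U i = true -> U j = false -> M i j = 0) ->
  (forall i j, (i < n)%nat -> (j < n)%nat -> V i = true -> V j = false -> M i j = 0) ->
  ~ SIA n M.
Proof. intros Hu HU Hv HV Hd CU CV. apply not_SIA_io. intros j Hj.
  destruct (U j) eqn:E.
  - exists v. split; auto. intros N. exists N. split; auto.
    apply (mpow_zero_sets n M (fun _ => V)); auto. specialize (Hd j Hj). rewrite E in Hd. auto.
  - exists u. split; auto. intros N. exists N. split; auto.
    apply (mpow_zero_sets n M (fun _ => U)); auto. Qed.

Definition fmat (f : nat -> nat) : mat := fun i j => if Nat.eqb (f i) j then 1 else 0.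

Lemma mmul_fmat n f M i j : (f i < n)%nat -> mmul n (fmat f) M i j = M (f i) j.
Proof. intros H. unfold mmul, fmat. apply (rsum_ind n (f i) (fun k => M k j) H). Qed.

Lemma iter_lt n f m i : (forall i, f i < n)%nat -> (i < n)%nat -> (Nat.iter m f i < n)%nat.
Proof. intros Hf Hi. destruct m; simpl; auto. Qed.

Lemma mpow_fmat n f : (forall i, f i < n)%nat -> forall m i j, (i < n)%nat ->
  mpow n (fmat f) m i j = if Nat.eqb (Nat.iter m f i) j then 1 else 0.
Proof. intros Hf m. induction m; intros i j Hi; simpl. reflexivity.
  unfold mmul. rewrite (rsum_ext n _ (fun k => (if Nat.eqb (Nat.iter m f i) k then 1 else 0) * fmat f k j)).
  rewrite rsum_ind. reflexivity. apply iter_lt; auto.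
  intros k Hk. rewrite IHm by auto. reflexivity. Qed.

Lemma fmat_SIA n f t : (forall i, f i < n)%nat -> (forall i, f (f i) = t) -> SIA n (fmat f).
Proof. intros Hf Ht. assert (Htn : (t < n)%nat) by (rewrite <- (Ht 0%nat); auto).
  split; [split|].
  - intros i j _ _. unfold fmat. destruct (Nat.eqb _ _); lra.
  - intros i Hi. apply rsum_ind1. auto.
  - exists (fun j => if Nat.eqb t j then 1 else 0). split; [|split].
    + intros j _. destruct (Nat.eqb _ _); lra.
    + apply rsum_ind1; auto.
    + intros i j Hi Hj eps He. exists 2%nat. intros m Hm. rewrite mpow_fmat by auto.
      destruct m as [|[|m]]; try lia.
      assert (E : Nat.iter (S (S m)) f i = t) by (simpl; apply Ht). rewrite E.
      unfold R_dist. rewrite Rminus_diag, Rabs_R0. lra. Qed.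

Lemma F_spec n P X j : F n P X j = true <-> ((j < n)%nat /\ exists i, (i < n)%nat /\ X i = true /\ 0 < P i j).
Proof. unfold F. rewrite andb_true_iff, Nat.ltb_lt, existsb_exists. split.
  - intros [Hj [i [Hi H]]]. apply in_seq in Hi. apply andb_true_iff in H as [H1 H2].
    unfold posb in H2. destruct (Rlt_dec 0 (P i j)); try discriminate. split; auto. exists i; split; [lia|auto].
  - intros [Hj [i [Hi [H1 H2]]]]. split; auto. exists i. split. apply in_seq; lia.
    rewrite H1. unfold posb. destruct (Rlt_dec 0 (P i j)); auto. Qed.

Lemma F_zero n P X i j : stochastic n P -> (i < n)%nat -> X i = true -> (j < n)%nat ->
  F n P X j = false -> P i j = 0.
Proof. intros [Hp _] Hi HX Hj HF. destruct (Rlt_dec 0 (P i j)) as [h|h].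
  - assert (F n P X j = true) by (apply F_spec; split; eauto). congruence.
  - specialize (Hp i j Hi Hj). lra. Qed.

Lemma F_in n P X i j : (i < n)%nat -> X i = true -> (j < n)%nat -> 0 < P i j -> F n P X j = true.
Proof. intros. apply F_spec. split; eauto. Qed.

Lemma F_nonempty n P X x : stochastic n P -> (x < n)%nat -> X x = true -> exists j, (j < n)%nat /\ F n P X j = true.
Proof. intros [_ Hs] Hx HX. destruct (rsum_pos_exists n (P x) (Hs x Hx)) as [j [Hj Hp]].
  exists j. split; auto. eapply F_in; [exact Hx|exact HX|exact Hj|exact Hp]. Qed.

Lemma filter_len_sub (S T : nat -> bool) l : (forall x, In x l -> S x = true -> T x = true) ->
  (length (filter S l) <= length (filter T l))%nat.
Proof. induction l; simpl; intros H; auto.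
  assert (IH : (length (filter S l) <= length (filter T l))%nat) by (apply IHl; auto).
  destruct (S a) eqn:E1; destruct (T a) eqn:E2; simpl; try lia.
  rewrite (H a) in E2; auto; discriminate. Qed.

Lemma filter_len_strict (S T : nat -> bool) l : (forall x, In x l -> S x = true -> T x = true) ->
  (exists x, In x l /\ T x = true /\ S x = false) ->
  (length (filter S l) < length (filter T l))%nat.
Proof. induction l; simpl; intros H [x [Hx [H1 H2]]]; [contradiction|].
  destruct Hx as [<-|Hx].
  - rewrite H1, H2. simpl. assert (length (filter S l) <= length (filter T l))%nat; [|lia].
    apply filter_len_sub; auto.
  - assert (IH : (length (filter S l) < length (filter T l))%nat) by (apply IHl; eauto).
    destruct (S a) eqn:E1; destruct (T a) eqn:E2; simpl; try lia.
    rewrite (H a) in E2; auto; discriminate. Qed.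

Lemma card_strict n (S T : nat -> bool) : (forall i, (i < n)%nat -> S i = true -> T i = true) ->
  (exists i, (i < n)%nat /\ T i = true /\ S i = false) -> (card n S < card n T)%nat.
Proof. intros H [i [Hi [H1 H2]]]. unfold card. apply filter_len_strict.
  intros x Hx. apply in_seq in Hx. apply H. lia. exists i. rewrite in_seq. split; [lia|auto]. Qed.

Lemma card_eq_sub n (S T : nat -> bool) : (forall i, (i < n)%nat -> S i = true -> T i = true) ->
  (card n T <= card n S)%nat -> forall i, (i < n)%nat -> T i = true -> S i = true.
Proof. intros H Hc i Hi HT. destruct (S i) eqn:E; auto.
  assert (card n S < card n T)%nat by (apply card_strict; eauto). lia. Qed.

Lemma D_construct n P (X Y : nat -> bool) x y : stochastic n P -> (x < n)%nat -> (y < n)%nat ->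
  X x = true -> Y y = true -> F n P X x = false -> F n P X y = false ->
  (forall j, (j < n)%nat -> andb (F n P X j) (F n P Y j) = false) ->
  exists Q, SIA n Q /\ ~ SIA n (mmul n Q P).
Proof. intros HP Hx Hy HX HY Fx Fy Hd.
  set (f := fun i => if F n P X i then x else y).
  assert (Hf : forall i, (f i < n)%nat) by (intros; unfold f; destruct (F n P X i); auto).
  exists (fmat f). split.
  - apply (fmat_SIA n f y Hf). intros i. unfold f. destruct (F n P X i); rewrite ?Fx, ?Fy; auto.
  - destruct (F_nonempty n P X x HP Hx HX) as [u [Hu Fu]].
    destruct (F_nonempty n P Y y HP Hy HY) as [v [Hv Fv]].
    apply (not_SIA_two n _ (F n P X) (F n P Y) u v); auto.
    + intros i j Hi Hj Ui Uj. rewrite mmul_fmat by auto. unfold f. rewrite Ui.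
      eapply F_zero; eauto.
    + intros i j Hi Hj Vi Vj. rewrite mmul_fmat by auto. unfold f.
      assert (E : F n P X i = false) by (specialize (Hd i Hi); rewrite Vi, andb_true_r in Hd; auto).
      rewrite E. eapply F_zero; eauto. Qed.

Lemma case_closed n P A At : stochastic n P -> nonempty n A -> nonempty n At -> disjoint n A At ->
  (forall j, (j < n)%nat -> andb (F n P A j) (F n P At j) = false) ->
  (card n (union (F n P A) (F n P At)) <= card n (union A At))%nat ->
  (forall a, (a < n)%nat -> A a = true -> F n P A a = true) ->
  (forall a, (a < n)%nat -> At a = true -> F n P At a = true) -> ~ SIA n P.
Proof. intros HP [a [Ha HAa]] [b [Hb HAb]] hdis Hd Hc S1' S2'.
  assert (Hs := card_eq_sub n (union A At) (union (F n P A) (F n P At))).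
  assert (Hsub : forall i, (i < n)%nat -> union A At i = true -> union (F n P A) (F n P At) i = true).
  { intros i Hi. unfold union. intros H. apply orb_true_iff in H as [H|H]; apply orb_true_iff; auto. }
  specialize (Hs Hsub Hc).
  assert (FA_A : forall j, (j < n)%nat -> F n P A j = true -> A j = true).
  { intros j Hj HF. assert (U := Hs j Hj). unfold union in U. rewrite HF in U. specialize (U eq_refl).
    apply orb_true_iff in U as [U|U]; auto. specialize (Hd j Hj). rewrite HF, (S2' j Hj U) in Hd. discriminate. }
  assert (FAt_At : forall j, (j < n)%nat -> F n P At j = true -> At j = true).
  { intros j Hj HF. assert (U := Hs j Hj). unfold union in U. rewrite HF, orb_true_r in U. specialize (U eq_refl).
    apply orb_true_iff in U as [U|U]; auto. specialize (Hd j Hj). rewrite HF, (S1' j Hj U) in Hd. discriminate. }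
  apply (not_SIA_two n P A At a b); auto.
  - intros i j Hi Hj Ui Uj. eapply F_zero; eauto. destruct (F n P A j) eqn:E; auto. rewrite (FA_A j Hj E) in Uj. auto.
  - intros i j Hi Hj Ui Uj. eapply F_zero; eauto. destruct (F n P At j) eqn:E; auto. rewrite (FAt_At j Hj E) in Uj. auto.
Qed.

Lemma case_swap n P A At : stochastic n P -> nonempty n A -> nonempty n At -> disjoint n A At ->
  (forall j, (j < n)%nat -> andb (F n P A j) (F n P At j) = false) ->
  (card n (union (F n P A) (F n P At)) <= card n (union A At))%nat ->
  (forall a, (a < n)%nat -> At a = true -> F n P A a = true) ->
  (forall a, (a < n)%nat -> A a = true -> F n P At a = true) -> ~ SIA n P.
Proof. intros HP [a [Ha HAa]] [b [Hb HAb]] hdis Hd Hc S1' S2'.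
  assert (Hs := card_eq_sub n (union A At) (union (F n P A) (F n P At))).
  assert (Hsub : forall i, (i < n)%nat -> union A At i = true -> union (F n P A) (F n P At) i = true).
  { intros i Hi. unfold union. intros H. apply orb_true_iff in H as [H|H]; apply orb_true_iff; auto. }
  specialize (Hs Hsub Hc).
  assert (FA_At : forall j, (j < n)%nat -> F n P A j = true -> At j = true).
  { intros j Hj HF. assert (U := Hs j Hj). unfold union in U. rewrite HF in U. specialize (U eq_refl).
    apply orb_true_iff in U as [U|U]; auto. specialize (Hd j Hj). rewrite HF, (S2' j Hj U) in Hd. discriminate. }
  assert (FAt_A : forall j, (j < n)%nat -> F n P At j = true -> A j = true).
  { intros j Hj HF. assert (U := Hs j Hj). unfold union in U. rewrite HF, orb_true_r in U. specialize (U eq_refl).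
    apply orb_true_iff in U as [U|U]; auto. specialize (Hd j Hj). rewrite HF, (S1' j Hj U) in Hd. discriminate. }
  set (Sq := fun m : nat => if Nat.even m then A else At).
  assert (HZ : forall m k j, (k < n)%nat -> (j < n)%nat -> Sq m k = true -> Sq (S m) j = false -> P k j = 0).
  { intros m k j Hk Hj H1 H2. unfold Sq in *. rewrite Nat.even_succ, <- Nat.negb_even in H2.
    destruct (Nat.even m); simpl in H1, H2.
    - eapply F_zero; eauto. destruct (F n P A j) eqn:E; auto. rewrite (FA_At j Hj E) in H2; auto.
    - eapply F_zero; eauto. destruct (F n P At j) eqn:E; auto. rewrite (FAt_A j Hj E) in H2; auto. }
  apply not_SIA_io. intros j Hj. exists a. split; auto. intros N.
  destruct (A j) eqn:EA.
  - exists (S (2 * N)). split; [lia|]. apply (mpow_zero_sets n P Sq HZ); auto.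
    unfold Sq. rewrite Nat.even_succ, <- Nat.negb_even, Nat.even_even. simpl.
    specialize (hdis j Hj). rewrite EA in hdis. auto.
  - exists (2 * N)%nat. split; [lia|]. apply (mpow_zero_sets n P Sq HZ); auto.
    unfold Sq. rewrite Nat.even_even. auto.
Qed.

Lemma G_S1 n P : G n P -> S1 n P.
Proof. intros [HS HG]. assert (HP : stochastic n P) by apply HS. split; auto.
  intros A At hA hAt hdis.
  destruct (classic (nonempty n (inter (F n P A) (F n P At)))) as [h|h]; [left; auto|right; split; auto].
  assert (Hd : forall j, (j < n)%nat -> andb (F n P A j) (F n P At j) = false).
  { intros j Hj. destruct (andb (F n P A j) (F n P At j)) eqn:E; auto. exfalso. apply h. exists j. auto. }
  assert (Hd' : forall j, (j < n)%nat -> andb (F n P At j) (F n P A j) = false).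
  { intros j Hj. rewrite andb_comm. auto. }
  destruct (Nat.lt_ge_cases (card n (union A At)) (card n (union (F n P A) (F n P At)))) as [Hlt|Hle]; [exact Hlt|].
  exfalso.
  assert (NS : ~ SIA n P -> False) by (intros C; apply C; exact HS).
  assert (ND : (exists Q, SIA n Q /\ ~ SIA n (mmul n Q P)) -> False).
  { intros [Q [HQ HQP]]. apply HQP. apply HG. exact HQ. }
  set (FA := F n P A) in *. set (FAt := F n P At) in *.
  set (pA1 := exists a, (a < n)%nat /\ A a = true /\ FA a = false).
  set (pAt1 := exists a, (a < n)%nat /\ At a = true /\ FA a = false).
  set (pA2 := exists a, (a < n)%nat /\ A a = true /\ FAt a = false).
  set (pAt2 := exists a, (a < n)%nat /\ At a = true /\ FAt a = false).
  assert (neg : forall (X Z : nat -> bool), ~ (exists a, (a < n)%nat /\ X a = true /\ Z a = false) ->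
     forall a, (a < n)%nat -> X a = true -> Z a = true).
  { intros X Z Hn a Ha HX. destruct (Z a) eqn:E; auto. exfalso. apply Hn. eauto. }
  destruct (classic pA1) as [c1|c1]; destruct (classic pAt1) as [c2|c2];
  destruct (classic pA2) as [c3|c3]; destruct (classic pAt2) as [c4|c4].
  all: try (apply ND; destruct c1 as [a [Ha [HAa Fa]]]; destruct c2 as [b [Hb [HAb Fb]]];
            apply (D_construct n P A At a b); auto; fail).
  all: try (apply ND; destruct c3 as [a [Ha [HAa Fa]]]; destruct c4 as [b [Hb [HAb Fb]]];
            apply (D_construct n P At A b a); auto; fail).
  all: try (destruct hA as [a [Ha HAa]];
     assert (X1 := neg _ _ c1 a Ha HAa); assert (X2 := neg _ _ c3 a Ha HAa);
     specialize (Hd a Ha); rewrite X1, X2 in Hd; discriminate).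
  all: try (destruct hAt as [a [Ha HAa]];
     assert (X1 := neg _ _ c2 a Ha HAa); assert (X2 := neg _ _ c4 a Ha HAa);
     specialize (Hd a Ha); rewrite X1, X2 in Hd; discriminate).
  all: first [ apply NS; apply (case_closed n P A At); auto; [exact (neg _ _ c1)|exact (neg _ _ c4)]
             | apply NS; apply (case_swap n P A At); auto; [exact (neg _ _ c2)|exact (neg _ _ c3)] ].
Qed.

Definition P0 (n : nat) : mat := fun i j =>
  if Nat.eqb i 1 then (if Nat.eqb 0 j then 1 else 0)
  else if Nat.eqb i 2 then (if orb (Nat.eqb 1 j) (Nat.eqb 2 j) then /2 else 0)
  else / INR n.

Lemma P0_stoch n : (3 <= n)%nat -> stochastic n (P0 n).
Proof. intros Hn. assert (Hpos : 0 < INR n) by (apply lt_0_INR; lia). split.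
  - intros i j _ _. unfold P0. destruct (Nat.eqb i 1); [destruct (Nat.eqb 0 j); lra|].
    destruct (Nat.eqb i 2); [destruct (_ || _); lra|]. left. apply Rinv_0_lt_compat. auto.
  - intros i Hi. unfold P0. destruct (Nat.eqb i 1). apply rsum_ind1; lia.
    destruct (Nat.eqb i 2).
    + rewrite (rsum_ext n _ (fun k => (if Nat.eqb 1 k then 1 else 0) * /2 + (if Nat.eqb 2 k then 1 else 0) * /2)).
      rewrite rsum_plus. rewrite (rsum_ind n 1 (fun _ => /2)), (rsum_ind n 2 (fun _ => /2)) by lia. lra.
      intros k Hk. destruct (Nat.eqb_spec 1 k); destruct (Nat.eqb_spec 2 k); simpl; try lia; lra.
    + rewrite rsum_const. field. lra. Qed.

Lemma F_P0_1 n X j : (3 <= n)%nat -> (j < n)%nat -> X 1%nat = true -> (forall i, (i < n)%nat -> X i = true -> i = 1%nat) ->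
  (F n (P0 n) X j = true <-> j = 0%nat).
Proof. intros Hn Hj H1 Hx. rewrite F_spec. split.
  - intros [_ [i [Hi [HX Hp]]]]. rewrite (Hx i Hi HX) in Hp. unfold P0 in Hp. simpl in Hp.
    destruct j; auto. simpl in Hp. lra.
  - intros ->. split; auto. exists 1%nat. split; [lia|split; auto]. unfold P0. simpl. lra. Qed.

Lemma F_P0_2 n X j : (3 <= n)%nat -> (j < n)%nat -> X 2%nat = true -> (forall i, (i < n)%nat -> X i = true -> i = 2%nat) ->
  (F n (P0 n) X j = true <-> (j = 1 \/ j = 2)%nat).
Proof. intros Hn Hj H1 Hx. rewrite F_spec. split.
  - intros [_ [i [Hi [HX Hp]]]]. rewrite (Hx i Hi HX) in Hp. unfold P0 in Hp. simpl in Hp.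
    destruct j as [|[|[|j]]]; auto; simpl in Hp; lra.
  - intros Hj'. split; auto. exists 2%nat. split; [lia|split; auto]. unfold P0. simpl.
    destruct Hj' as [-> | ->]; simpl; lra. Qed.

Lemma P0_right n X Y : (3 <= n)%nat -> X 1%nat = true -> (forall i, (i < n)%nat -> X i = true -> i = 1%nat) ->
  Y 2%nat = true -> (forall i, (i < n)%nat -> Y i = true -> i = 2%nat) ->
  ~ nonempty n (inter (F n (P0 n) X) (F n (P0 n) Y)) /\
  ~ nonempty n (inter (F n (P0 n) Y) (F n (P0 n) X)) /\
  (card n (union (F n (P0 n) X) (F n (P0 n) Y)) > card n (union X Y))%nat /\
  (card n (union (F n (P0 n) Y) (F n (P0 n) X)) > card n (union Y X))%nat.
Proof. intros Hn X1 HX Y2 HY.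
  assert (FX := fun j Hj => F_P0_1 n X j Hn Hj X1 HX).
  assert (FY := fun j Hj => F_P0_2 n Y j Hn Hj Y2 HY).
  assert (Hne : forall j, (j < n)%nat -> andb (F n (P0 n) X j) (F n (P0 n) Y j) = false).
  { intros j Hj. destruct (F n (P0 n) X j) eqn:E1; auto. destruct (F n (P0 n) Y j) eqn:E2; auto.
    apply FX in E1; auto. apply FY in E2; auto. lia. }
  assert (Hsub : forall i, (i < n)%nat -> union X Y i = true -> union (F n (P0 n) X) (F n (P0 n) Y) i = true).
  { intros i Hi. unfold union. intros H. apply orb_true_iff in H. apply orb_true_iff. right. apply FY; auto.
    destruct H as [H|H]; [left; apply HX|right; apply HY]; auto. }
  assert (Hw : exists i, (i < n)%nat /\ union (F n (P0 n) X) (F n (P0 n) Y) i = true /\ union X Y i = false).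
  { exists 0%nat. split; [lia|]. unfold union. split.
    - apply orb_true_iff. left. apply FX; auto; lia.
    - destruct (X 0%nat) eqn:E1. specialize (HX 0%nat ltac:(lia) E1). lia.
      destruct (Y 0%nat) eqn:E2. specialize (HY 0%nat ltac:(lia) E2). lia. auto. }
  assert (Hc := card_strict n _ _ Hsub Hw).
  assert (Hcomm : forall (a b : nat -> bool), card n (union a b) = card n (union b a)).
  { intros a b. unfold card, union. f_equal. apply filter_ext. intros; apply orb_comm. }
  split; [|split; [|split]].
  - intros [j [Hj Hi]]. unfold inter in Hi. rewrite Hne in Hi; auto. discriminate.
  - intros [j [Hj Hi]]. unfold inter in Hi. rewrite andb_comm, Hne in Hi; auto. discriminate.
  - exact Hc.
  - rewrite Hcomm, (Hcomm Y X). exact Hc. Qed.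

Lemma P0_S1 n : (3 <= n)%nat -> S1 n (P0 n).
Proof. intros Hn. assert (HP := P0_stoch n Hn). split; auto.
  intros A At hA hAt hdis.
  assert (big : forall X i, (i < n)%nat -> X i = true -> i <> 1%nat -> i <> 2%nat ->
     forall j, (j < n)%nat -> F n (P0 n) X j = true).
  { intros X i Hi HXi H1 H2 j Hj. apply (F_in n (P0 n) X i j); auto. unfold P0.
    destruct (Nat.eqb_spec i 1); [lia|]. destruct (Nat.eqb_spec i 2); [lia|].
    apply Rinv_0_lt_compat. apply lt_0_INR. lia. }
  destruct (classic (exists i, (i < n)%nat /\ A i = true /\ i <> 1%nat /\ i <> 2%nat)) as [[i [Hi [HAi [H1 H2]]]]|nA].
  { left. destruct hAt as [b [Hb HAb]]. destruct (F_nonempty n _ At b HP Hb HAb) as [j [Hj Fj]].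
    exists j. split; auto. unfold inter. rewrite Fj, (big A i Hi HAi H1 H2 j Hj). auto. }
  destruct (classic (exists i, (i < n)%nat /\ At i = true /\ i <> 1%nat /\ i <> 2%nat)) as [[i [Hi [HAi [H1 H2]]]]|nAt].
  { left. destruct hA as [b [Hb HAb]]. destruct (F_nonempty n _ A b HP Hb HAb) as [j [Hj Fj]].
    exists j. split; auto. unfold inter. rewrite Fj, (big At i Hi HAi H1 H2 j Hj). auto. }
  assert (sA : forall i, (i < n)%nat -> A i = true -> i = 1%nat \/ i = 2%nat).
  { intros i Hi HA. destruct (Nat.eq_dec i 1); auto. destruct (Nat.eq_dec i 2); auto.
    exfalso. apply nA. eauto 6. }
  assert (sAt : forall i, (i < n)%nat -> At i = true -> i = 1%nat \/ i = 2%nat).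
  { intros i Hi HA. destruct (Nat.eq_dec i 1); auto. destruct (Nat.eq_dec i 2); auto.
    exfalso. apply nAt. eauto 6. }
  destruct hA as [a [Ha HAa]]. destruct hAt as [b [Hb HAb]].
  assert (Hab : a <> b). { intros ->. specialize (hdis b Hb). rewrite HAa, HAb in hdis. discriminate. }
  assert (onlyA : forall i, (i < n)%nat -> A i = true -> i = a).
  { intros i Hi HAi. destruct (Nat.eq_dec i b) as [->|]. specialize (hdis b Hb). rewrite HAi, HAb in hdis. discriminate.
    destruct (sA i Hi HAi); destruct (sA a Ha HAa); destruct (sAt b Hb HAb); lia. }
  assert (onlyAt : forall i, (i < n)%nat -> At i = true -> i = b).
  { intros i Hi HAi. destruct (Nat.eq_dec i a) as [->|]. specialize (hdis a Ha). rewrite HAi, HAa in hdis. discriminate.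
    destruct (sAt i Hi HAi); destruct (sA a Ha HAa); destruct (sAt b Hb HAb); lia. }
  right. destruct (sA a Ha HAa) as [->| ->]; destruct (sAt b Hb HAb) as [->| ->]; try lia.
  - destruct (P0_right n A At Hn HAa onlyA HAb onlyAt) as [h1 [h2 [h3 h4]]]. auto.
  - destruct (P0_right n At A Hn HAb onlyAt HAa onlyA) as [h1 [h2 [h3 h4]]]. auto.
Qed.

Lemma P0_notG n : (3 <= n)%nat -> ~ G n (P0 n).
Proof. intros Hn [_ HG].
  set (f := fun i => if Nat.eqb i 0 then 1%nat else 2%nat).
  assert (Hf : forall i, (f i < n)%nat) by (intros; unfold f; destruct (Nat.eqb i 0); lia).
  assert (HQ := fmat_SIA n f 2 Hf (fun i => ltac:(unfold f; destruct (Nat.eqb i 0); reflexivity))).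
  specialize (HG _ HQ).
  revert HG. apply (not_SIA_two n _ (fun j => Nat.eqb j 0) (fun j => orb (Nat.eqb 1 j) (Nat.eqb 2 j)) 0 1); auto; try lia.
  - intros j Hj. destruct (Nat.eqb_spec j 0); auto. subst. reflexivity.
  - intros i j Hi Hj Ui Uj. rewrite mmul_fmat by auto. unfold f. rewrite Ui. unfold P0. simpl.
    destruct j; simpl; auto. simpl in Uj. discriminate.
  - intros i j Hi Hj Vi Vj. rewrite mmul_fmat by auto. unfold f.
    assert (E : Nat.eqb i 0 = false) by (destruct i; auto; discriminate).
    rewrite E. unfold P0. replace (Nat.eqb 2 1) with false by reflexivity.
    replace (Nat.eqb 2 2) with true by reflexivity. rewrite Vj. reflexivity.
Qed.

Theorem proposition1 (n : nat) (hn : (3 <= n)%nat) :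
  (forall P : mat, G n P -> S1 n P) /\
  (exists P : mat, S1 n P /\ ~ G n P).
Proof. split. exact (G_S1 n). exists (P0 n). split. apply P0_S1; auto. apply P0_notG; auto. Qed.
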